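(* Let $G$ be a graph on $[n]$. Then $NC_G$ is a lattice if and only if $G$ is crossing closed. Moreover, if $G$ is crossing closed and $H,H'\in NC_G$, then $H\wedge H'=H\cap H'$ (the bond whose edge set is $E(H)\cap E(H')$), which is also the meet of $H$ and $H'$ in $L_G$; thus $NC_G$ is a meet-subsemilattice of $L_G$.
   Context: All graphs are finite simple graphs with vertex set $[n]=\{1,\dots,n\}$; edges are written $ij$ with $i<j$. Two edges $a_1a_2$ and $b_1b_2$ cross if $a_1<b_1<a_2<b_2$ or $b_1<a_1<b_2<a_2$. A spanning subgraph is identified with its edge set. A bond of $G$ is a spanning subgraph each of whose connected components is an induced subgraph of $G$. For a bond $H$, $\pi(H)$ is the set partition of $[n]$ whose blocks are the vertex sets of the connected components of $H$. A set partition is crossing if there are distinct blocks $B,B'$ and $a,c\in B$, $b,d\in B'$ with $a<b<c<d$, and noncrossing otherwise; a bond $H$ is noncrossing if $\pi(H)$ is. $L_G$ is the poset (bond lattice) of all bonds of $G$ ordered by inclusion of edge sets, and $NC_G$ is its subposet of noncrossing bonds. Two crossing edges $e,f$ are crossing closed if among all induced connected subgraphs of $G$ containing both $e$ and $f$ there is a unique one minimal with respect to containment; $G$ is crossing closed if every pair of crossing edges is crossing closed. *)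

(* Defs.v *)
(* Vertices [n] are represented by 'I_n (0-based; order preserved). *)
From mathcomp Require Import all_boot.
Set Implicit Arguments. Unset Strict Implicit. Unset Printing Implicit Defensive.

Section Defs.
Variable n : nat.
Notation V := 'I_n.
Notation edges := {set V * V}.

Definition is_graph (G : edges) : bool := [forall e in G, e.1 < e.2].

Definition adj (H : edges) : rel V := fun x y => ((x, y) \in H) || ((y, x) \in H).

Definition same_comp (H : edges) (x y : V) : bool := connect (adj H) x y.

(* H is a bond of G: H is a spanning subgraph of G and every connected
   component of H is an induced subgraph of G, i.e. every edge of G joining
   two vertices of the same component of H belongs to H. *)
Definition is_bond (G H : edges) : bool :=
  (H \subset G) && [forall e in G, same_comp H e.1 e.2 ==> (e \in H)].

(* pi(H) is crossing: distinct blocks B, B' with a,c in B, b,d in B', a<b<c<d *)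
Definition crossing_bond (H : edges) : bool :=
  [exists a : V, exists b : V, exists c : V, exists d : V,
     [&& a < b, b < c, c < d, same_comp H a c, same_comp H b d
       & ~~ same_comp H a b]].

Definition nc_bond (G H : edges) : bool := is_bond G H && ~~ crossing_bond H.

Definition crosses (e f : V * V) : bool :=
  [&& e.1 < f.1, f.1 < e.2 & e.2 < f.2] || [&& f.1 < e.1, e.1 < f.2 & f.2 < e.2].

Definition induced_connected (G : edges) (S : {set V}) : bool :=
  [forall x in S, forall y in S,
     connect (fun u v => [&& u \in S, v \in S & adj G u v]) x y].

(* induced connected subgraphs of G (identified with their vertex sets,
   containment of induced subgraphs = containment of vertex sets)
   containing both edges e and f *)
Definition ics_containing (G : edges) (e f : V * V) (S : {set V}) : bool :=
  [&& induced_connected G S, e.1 \in S, e.2 \in S, f.1 \in S & f.2 \in S].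

Definition minimal_in (P : pred {set V}) (S : {set V}) : Prop :=
  P S /\ forall T, P T -> T \subset S -> T = S.

Definition crossing_closed_pair (G : edges) (e f : V * V) : Prop :=
  exists S, minimal_in (ics_containing G e f) S /\
    forall S', minimal_in (ics_containing G e f) S' -> S' = S.

Definition crossing_closed (G : edges) : Prop :=
  forall e f, e \in G -> f \in G -> crosses e f -> crossing_closed_pair G e f.

Definition is_glb (P : pred edges) (H1 H2 M : edges) : Prop :=
  [/\ P M, M \subset H1, M \subset H2 &
      forall K, P K -> K \subset H1 -> K \subset H2 -> K \subset M].

Definition is_lub (P : pred edges) (H1 H2 J : edges) : Prop :=
  [/\ P J, H1 \subset J, H2 \subset J &
      forall K, P K -> H1 \subset K -> H2 \subset K -> J \subset K].

Definition is_lattice (P : pred edges) : Prop :=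
  forall H1 H2, P H1 -> P H2 ->
    (exists M, is_glb P H1 H2 M) /\ (exists J, is_lub P H1 H2 J).

End Defs.

(* Main.v *)
Require Import Defs.
From mathcomp Require Import all_boot.
From mathcomp Require Import zify.
Set Implicit Arguments. Unset Strict Implicit. Unset Printing Implicit Defensive.

Lemma adjC {n} (K : {set 'I_n * 'I_n}) : symmetric (adj K).
Proof. by move=> x y; rewrite /adj orbC. Qed.

Lemma scC {n} (K : {set 'I_n * 'I_n}) x y : same_comp K x y = same_comp K y x.
Proof. by rewrite /same_comp (sym_connect_sym (adjC K)). Qed.

Lemma sc_trans {n} (K : {set 'I_n * 'I_n}) x y z :
  same_comp K x y -> same_comp K y z -> same_comp K x z.
Proof. exact: connect_trans. Qed.

Lemma sc_edge {n} (K : {set 'I_n * 'I_n}) g : g \in K -> same_comp K g.1 g.2.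
Proof. by move=> gK; apply: connect1; rewrite /adj -surjective_pairing gK. Qed.

Lemma sc_mono {n} (K K' : {set 'I_n * 'I_n}) x y :
  K \subset K' -> same_comp K x y -> same_comp K' x y.
Proof.
move=> sub; apply: connect_sub => u v; rewrite /adj => /orP [] h; apply: connect1;
  by rewrite /adj (subsetP sub _ h) ?orbT.
Qed.

Lemma exit {n} (r : rel 'I_n) (P : pred 'I_n) u v :
  connect r u v -> P u -> ~~ P v ->
  exists s1 s2, [/\ connect r u s1, r s1 s2, P s1 & ~~ P s2].
Proof.
move=> /connectP [p pth ->] {v}.
elim: p u pth => [|z p IH] u /=.
  by move=> _ Pu; rewrite Pu.
case/andP=> ruz pth Pu nPl.
case Pz: (P z).
  have [s1 [s2 [c r' P1 P2]]] := IH z pth Pz nPl.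
  exists s1, s2; split => //; exact: connect_trans (connect1 ruz) c.
exists u, z; split; rewrite ?Pz ?connect0 //.
Qed.

Lemma connect_restrict {n} (r r' : rel 'I_n) (S : {set 'I_n}) x y :
  (forall u v, u \in S -> r u v -> (v \in S) && r' u v) -> x \in S -> connect r x y ->
  connect (fun u v => [&& u \in S, v \in S & r' u v]) x y.
Proof.
move=> cl Sx /connectP [p pth ->] {y}.
elim: p x Sx pth => [|z p IH] x Sx /=; first by rewrite connect0.
case/andP=> rxz pth; have /andP [Sz r'xz] := cl _ _ Sx rxz.
apply: connect_trans (IH z Sz pth); apply: connect1; by rewrite Sx Sz r'xz.
Qed.

Lemma comp_ic {n} (G H : {set 'I_n * 'I_n}) z :
  H \subset G -> induced_connected G [set x | same_comp H z x].
Proof.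
move=> sub; apply/forallP => x; apply/implyP => Sx; apply/forallP => y; apply/implyP => Sy.
have xy : same_comp H x y.
  move: Sx Sy; rewrite !inE scC; exact: sc_trans.
apply: (connect_restrict (r := adj H)) => // u v Su huv.
rewrite !inE in Su *; rewrite (sc_trans Su (connect1 huv)) /=.
by move: huv; rewrite /adj => /orP [] h; rewrite (subsetP sub _ h) ?orbT.
Qed.

Lemma ic_conn {n} (G K : {set 'I_n * 'I_n}) (S : {set 'I_n}) x y :
  induced_connected G S ->
  (forall u v, u \in S -> v \in S -> adj G u v -> adj K u v) ->
  x \in S -> y \in S -> same_comp K x y.
Proof.
move=> /forallP icS hadj Sx Sy.
move/implyP: (icS x) => /(_ Sx) /forallP /(_ y) /implyP /(_ Sy) cxy.
apply: (connect_sub _ cxy) => u v /and3P [Su Sv huv]; apply: connect1; exact: hadj.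
Qed.

Lemma comp_in {n} (K : {set 'I_n * 'I_n}) (T : pred 'I_n) u v :
  (forall g, g \in K -> T g.1 && T g.2) -> same_comp K u v -> u = v \/ (T u /\ T v).
Proof.
move=> hK.
have adjT : forall x y, adj K x y -> T x && T y.
  move=> x y /orP [] /hK //=; by rewrite andbC.
move=> /connectP [p pth ->]; case: p pth => [|z p] /=; first by left.
case/andP => huz pth; right.
have /andP [Tu Tz] := adjT _ _ huz; split => //; clear huz.
elim: p z Tz pth => [|w p IH] z Tz //=.
case/andP => hzw pth; apply: IH pth; by case/andP: (adjT _ _ hzw).
Qed.

Lemma bond_inter {n} (G H H' : {set 'I_n * 'I_n}) :
  is_bond G H -> is_bond G H' -> is_bond G (H :&: H').
Proof.
case/andP=> sH /forallP bH; case/andP=> sH' /forallP bH'.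
apply/andP; split; first by apply: subset_trans (subsetIl _ _) sH.
apply/forallP => g; apply/implyP => gG; apply/implyP => sc.
rewrite inE; apply/andP; split.
- move/implyP: (bH g) => /(_ gG) /implyP; apply; exact: sc_mono (subsetIl _ _) sc.
- move/implyP: (bH' g) => /(_ gG) /implyP; apply; exact: sc_mono (subsetIr _ _) sc.
Qed.

Lemma bond_edge {n} (G H : {set 'I_n * 'I_n}) g :
  is_bond G H -> g \in G -> same_comp H g.1 g.2 -> g \in H.
Proof.
case/andP=> _ /forallP bH gG sc.
by move/implyP: (bH g) => /(_ gG) /implyP; apply.
Qed.

Lemma ncP {n} (H : {set 'I_n * 'I_n}) (a b c d : 'I_n) :
  ~~ crossing_bond H -> a < b -> b < c -> c < d ->
  same_comp H a c -> same_comp H b d -> same_comp H a b.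
Proof.
move=> nc ab bc cd ac bd; apply/negPn/negP => nab; move/negP: nc; apply.
apply/existsP; exists a; apply/existsP; exists b; apply/existsP; exists c;
  apply/existsP; exists d.
by rewrite ab bc cd ac bd /= (negbTE nab).
Qed.

Lemma exists_minimal {n} (Q : pred {set 'I_n}) X :
  Q X -> exists S, minimal_in Q S /\ S \subset X.
Proof.
move: (leqnn #|X|); move: {2}#|X| => m; elim: m X => [|m IH] X.
  move=> hX QX; exists X; split => //; split => // T QT sTX.
  apply/eqP; rewrite eqEsubset sTX /=; apply/subsetP => x xX.
  have : 0 < #|X| by apply/card_gt0P; exists x.
  lia.
move=> hX QX.
case: (boolP [exists T : {set 'I_n}, Q T && (T \proper X)]).
  case/existsP => T /andP [QT pTX].
  have [|S [mS sST]] := IH T _ QT; first by have := proper_card pTX; lia.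
  exists S; split => //; apply: subset_trans sST (proper_sub pTX).
move=> nex; exists X; split => //; split => // T QT sTX.
apply/eqP; apply: contraNT nex => neq.
by apply/existsP; exists T; rewrite QT properEneq neq sTX.
Qed.

Lemma crossesC {n} (e f : 'I_n * 'I_n) : crosses e f = crosses f e.
Proof. by rewrite /crosses orbC. Qed.

Lemma ord_adj {n} (K : {set 'I_n * 'I_n}) u v :
  (forall g, g \in K -> g.1 < g.2) -> adj K u v -> u < v -> (u, v) \in K.
Proof.
move=> oK /orP [] // h uv; have := oK _ h => /= h'; exfalso; lia.
Qed.

Lemma ord_neq_lt {n} (x y : 'I_n) : x != y -> ~~ (x < y) -> y < x.
Proof.
move=> h1 h2; have h : (x : nat) <> y by move=> e; move/eqP: h1; apply; apply: val_inj.
rewrite -leqNgt in h2; lia.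
Qed.

Lemma cross_exit {n} (K : {set 'I_n * 'I_n}) (x y u v : 'I_n) :
  (forall g, g \in K -> g.1 < g.2) -> adj K u v -> x < u -> u < y ->
  ~~ ((x < v) && (v < y)) -> v != x -> v != y ->
  exists e, [/\ e \in K, crosses e (x, y) & (e.1 = u \/ e.1 = v)].
Proof.
move=> oK huv xu uy nv vx vy.
have vx' : (v : nat) <> x by move=> h; move/eqP: vx; apply; apply: val_inj.
have vy' : (v : nat) <> y by move=> h; move/eqP: vy; apply; apply: val_inj.
have nv' : (v <= x) \/ (y <= v) by case/nandP: nv => h; [left|right]; rewrite leqNgt.
case: (ltngtP u v) => [uv|vu|uv].
- exists (u, v); split; [exact: ord_adj | | by left].
  rewrite /crosses /=; apply/orP; right; apply/and3P; split => //; lia.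
- exists (v, u); split; [apply: ord_adj => //; by rewrite adjC | | by right].
  rewrite /crosses /=; apply/orP; left; apply/and3P; split => //; lia.
- exfalso; lia.
Qed.

Lemma L1 {n} (K : {set 'I_n * 'I_n}) (a b c d : 'I_n) :
  (forall g, g \in K -> g.1 < g.2) -> a < b -> b < c -> c < d ->
  same_comp K a c -> same_comp K b d -> ~~ same_comp K a b ->
  exists e f, [/\ e \in K, f \in K, crosses e f, same_comp K a e.1 & same_comp K b f.1].
Proof.
move=> oK ab bc cd ac bd nab.
have neqA : forall z w, same_comp K a z -> same_comp K b w -> z != w.
  move=> z w az bw; apply/eqP => zw; subst w; move/negP: nab; apply.
  apply: sc_trans az _; by rewrite scC.
have ncb : ~~ (c < b) by rewrite -leqNgt ltnW.
have [p [q [ap apq /= pb /= nqb]]] := exit (P := fun u : 'I_n => u < b) ac ab ncb.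
have aq : same_comp K a q := sc_trans ap (connect1 apq).
have bq : b < q by apply: ord_neq_lt => //; exact: neqA aq (connect0 _ _).
have ndc : ~~ (d < c) by rewrite -leqNgt ltnW.
have [x [y [bx axy /= xc /= nyc]]] := exit (P := fun u : 'I_n => u < c) bd bc ndc.
have by_ : same_comp K b y := sc_trans bx (connect1 axy).
have cy : c < y by apply: ord_neq_lt => //; rewrite eq_sym; exact: neqA ac by_.
have pq : (p, q) \in K by apply: ord_adj => //; apply: ltn_trans pb bq.
have xy : (x, y) \in K by apply: ord_adj => //; apply: ltn_trans xc cy.
case Hp: ((x < p) && (p < y)); last first.
  have cp : same_comp K c p by rewrite scC in ac; exact: sc_trans ac ap.
  have [s1 [s2 [cs1 s12 /= /andP [xs1 s1y] /= nPs2]]] :=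
    exit (P := fun u : 'I_n => (x < u) && (u < y)) cp (introT andP (conj xc cy)) (negbT Hp).
  have as1 : same_comp K a s1 := sc_trans ac cs1.
  have as2 : same_comp K a s2 := sc_trans as1 (connect1 s12).
  have [e [eK ce e1]] := cross_exit oK s12 xs1 s1y nPs2 (neqA _ _ as2 bx) (neqA _ _ as2 by_).
  exists e, (x, y); split => //; by case: e1 => ->.
case Hx: ((p < x) && (x < q)); last first.
  have [s1 [s2 [bs1 s12 /= /andP [ps1 s1q] /= nPs2]]] :=
    exit (P := fun u : 'I_n => (p < u) && (u < q)) bx (introT andP (conj pb bq)) (negbT Hx).
  have bs2 : same_comp K b s2 := sc_trans bs1 (connect1 s12).
  have s2p : s2 != p by rewrite eq_sym; exact: neqA ap bs2.
  have s2q : s2 != q by rewrite eq_sym; exact: neqA aq bs2.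
  have [f [fK cf f1]] := cross_exit oK s12 ps1 s1q nPs2 s2p s2q.
  exists (p, q), f; split => //; first by rewrite crossesC.
  by case: f1 => ->; [exact: bs1 | exact: bs2].
move/andP: Hp => [h1 _]; move/andP: Hx => [h2 _]; exfalso; lia.
Qed.

Lemma ordG {n} (G : {set 'I_n * 'I_n}) : is_graph G -> forall g, g \in G -> g.1 < g.2.
Proof. move=> /forallP h g gG; exact: (implyP (h g) gG). Qed.

Lemma nc_inter {n} (G H H' : {set 'I_n * 'I_n}) : is_graph G -> crossing_closed G ->
  nc_bond G H -> nc_bond G H' -> nc_bond G (H :&: H').
Proof.
move=> gG cc /andP [bH ncH] /andP [bH' ncH'].
rewrite /nc_bond bond_inter //=.
apply/negP => /existsP [a /existsP [b /existsP [c /existsP [d]]]].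
case/and5P => ab bc cd ac /andP [bd nab].
set K := H :&: H'.
have sKG : K \subset G by case/andP: (bH) => sHG _; exact: subset_trans (subsetIl _ _) sHG.
have oK : forall g, g \in K -> g.1 < g.2 by move=> g gK; apply: (ordG gG); exact: (subsetP sKG).
have [e [f [eK fK cef ae bf]]] := L1 oK ab bc cd ac bd nab.
have eG : e \in G := subsetP sKG _ eK.
have fG : f \in G := subsetP sKG _ fK.
have [S [[icsS _] uniqS]] := cc e f eG fG cef.
have key : forall H0, is_bond G H0 -> ~~ crossing_bond H0 -> K \subset H0 ->
    S \subset [set x | same_comp H0 e.1 x].
  move=> H0 bH0 ncH0 sKH0.
  have sH0G : H0 \subset G by case/andP: bH0.
  have ab0 : same_comp H0 a b.
    exact: ncP ncH0 ab bc cd (sc_mono sKH0 ac) (sc_mono sKH0 bd).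
  have e1f1 : same_comp H0 e.1 f.1.
    apply: sc_trans (sc_mono sKH0 bf); apply: sc_trans ab0; rewrite scC.
    exact: sc_mono sKH0 ae.
  have icsP : ics_containing G e f [set x | same_comp H0 e.1 x].
    apply/and5P; split; rewrite ?inE.
    - exact: comp_ic.
    - exact: connect0.
    - exact: sc_edge (subsetP sKH0 _ eK).
    - exact: e1f1.
    - exact: sc_trans e1f1 (sc_edge (subsetP sKH0 _ fK)).
  have [T [mT sT]] := exists_minimal icsP.
  by rewrite -(uniqS T mT).
have SH := key H bH ncH (subsetIl _ _).
have SH' := key H' bH' ncH' (subsetIr _ _).
case/and5P: icsS => icS e1S _ f1S _.
have ef : same_comp K e.1 f.1.
  apply: (ic_conn icS) => // u v Su Sv auv.
  have hu := subsetP SH _ Su; have hv := subsetP SH _ Sv.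
  have hu' := subsetP SH' _ Su; have hv' := subsetP SH' _ Sv.
  rewrite !inE in hu hv hu' hv'.
  have suv : same_comp H u v by rewrite scC in hu; exact: sc_trans hu hv.
  have suv' : same_comp H' u v by rewrite scC in hu'; exact: sc_trans hu' hv'.
  case/orP: auv => g.
  - by rewrite /adj inE (bond_edge bH g suv) (bond_edge bH' g suv').
  - rewrite scC in suv; rewrite scC in suv'.
    by rewrite /adj !inE (bond_edge bH g suv) (bond_edge bH' g suv') orbT.
move/negP: nab; apply; apply: sc_trans ae (sc_trans ef _); by rewrite scC.
Qed.

Lemma nc_top {n} (G : {set 'I_n * 'I_n}) : is_graph G -> crossing_closed G -> nc_bond G G.
Proof.
move=> gG cc; apply/andP; split.
  apply/andP; split => //; apply/forallP => g; apply/implyP => ->; by rewrite implybT.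
apply/negP => /existsP [a /existsP [b /existsP [c /existsP [d]]]].
case/and5P => ab bc cd ac /andP [bd nab].
have [e [f [eG fG cef ae bf]]] := L1 (ordG gG) ab bc cd ac bd nab.
have [S [[/and5P [icS e1S e2S f1S f2S] _] _]] := cc e f eG fG cef.
have ef : same_comp G e.1 f.1 by apply: (ic_conn icS).
move/negP: nab; apply; apply: sc_trans ae (sc_trans ef _); by rewrite scC.
Qed.

Lemma nc_induced {n} (G : {set 'I_n * 'I_n}) (T : {set 'I_n}) :
  is_graph G -> induced_connected G T ->
  nc_bond G [set g in G | (g.1 \in T) && (g.2 \in T)].
Proof.
move=> gG icT; set B := [set g in G | _].
have hB : forall g, g \in B -> (g.1 \in T) && (g.2 \in T) by move=> g; rewrite inE => /andP [].
have hadj : forall u v, u \in T -> v \in T -> adj G u v -> adj B u v.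
  by move=> u v uT vT /orP [] h; rewrite /adj !inE h /= ?uT ?vT ?orbT.
apply/andP; split.
  apply/andP; split; first by apply/subsetP => g; rewrite inE => /andP [].
  apply/forallP => g; apply/implyP => gG'; apply/implyP => sc.
  have [e12|[h1 h2]] := comp_in hB sc.
    by have := ordG gG gG'; rewrite e12 ltnn.
  by rewrite inE gG' /=; apply/andP; split; [exact: h1 | exact: h2].
apply/negP => /existsP [a /existsP [b /existsP [c /existsP [d]]]].
case/and5P => ab bc cd ac /andP [bd nab].
have [eac|[aT cT]] := comp_in hB ac; first by subst c; move: ab bc; lia.
have [ebd|[bT dT]] := comp_in hB bd; first by subst d; move: cd bc; lia.
by move/negP: nab; apply; apply: (ic_conn icT hadj).
Qed.

Lemma nc_single {n} (G : {set 'I_n * 'I_n}) g :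
  is_graph G -> g \in G -> nc_bond G [set g].
Proof.
move=> gG gin.
set T := fun u : 'I_n => ((u : nat) == g.1) || ((u : nat) == g.2).
have hB : forall h, h \in [set g] -> T h.1 && T h.2.
  by move=> h; rewrite in_set1 => /eqP ->; rewrite /T !eqxx orbT.
have og := ordG gG gin.
apply/andP; split.
  apply/andP; split; first by rewrite sub1set.
  apply/forallP => h; apply/implyP => hG; apply/implyP => sc.
  have oh := ordG gG hG.
  have [e12|[h1 h2]] := comp_in hB sc.
    by move: oh; rewrite e12 ltnn.
  rewrite in_set1; apply/eqP.
  move: h1 h2 oh og; rewrite /T; clear hB T; case: h {hG sc} => h1 h2; case: g {gin} => g1 g2 /=.
  move=> /orP [] /eqP e1 /orP [] /eqP e2 o1 o2; try (exfalso; lia).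
  by congr pair; apply: val_inj.
apply/negP => /existsP [a /existsP [b /existsP [c /existsP [d]]]].
case/and5P => ab bc cd ac /andP [bd nab].
have [eac|[aT cT]] := comp_in hB ac; first by subst c; move: ab bc; lia.
have [ebd|[bT dT]] := comp_in hB bd; first by subst d; move: cd bc; lia.
move: aT bT cT ab bc; rewrite /T.
by move=> /orP [] /eqP e1 /orP [] /eqP e2 /orP [] /eqP e3; lia.
Qed.

Lemma lattice_cc {n} (G : {set 'I_n * 'I_n}) :
  is_graph G -> is_lattice (nc_bond G) -> crossing_closed G.
Proof.
move=> gG lat e f eG fG cef.
have [_ [J [ncJ eJ fJ leJ]]] := lat _ _ (nc_single gG eG) (nc_single gG fG).
rewrite sub1set in eJ; rewrite sub1set in fJ.
have /andP [bJ ncrJ] := ncJ.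
have sJG : J \subset G by case/andP: bJ.
set P := [set x | same_comp J e.1 x].
have e1f1 : same_comp J e.1 f.1.
  case/orP: cef => /and3P [h1 h2 h3].
  - exact: ncP ncrJ h1 h2 h3 (sc_edge eJ) (sc_edge fJ).
  - rewrite scC; exact: ncP ncrJ h1 h2 h3 (sc_edge fJ) (sc_edge eJ).
have icsP : ics_containing G e f P.
  apply/and5P; split; rewrite ?inE.
  - exact: comp_ic.
  - exact: connect0.
  - exact: sc_edge eJ.
  - exact: e1f1.
  - exact: sc_trans e1f1 (sc_edge fJ).
have low : forall T, ics_containing G e f T -> P \subset T.
  move=> T /and5P [icT e1T e2T f1T f2T].
  have ncB := nc_induced gG icT.
  set B := [set g in G | _] in ncB.
  have hB : forall g, g \in B -> (g.1 \in T) && (g.2 \in T) by move=> g; rewrite inE => /andP [].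
  have JB : J \subset B.
    apply: leJ => //; rewrite sub1set inE ?eG ?fG /= ?e1T ?e2T ?f1T ?f2T //.
  apply/subsetP => x; rewrite inE => /(sc_mono JB) sc.
  by have [<-|[_ h]] := comp_in hB sc; [exact: e1T | exact: h].
exists P; split.
  split => // T icT sTP; apply/eqP; rewrite eqEsubset sTP; exact: low.
move=> S' [icS' minS']; apply: esym; apply: minS' icsP (low _ icS').
Qed.

Theorem theorem2p6 (n : nat) (G : {set 'I_n * 'I_n}) :
  is_graph G ->
  (is_lattice (nc_bond G) <-> crossing_closed G) /\
  (crossing_closed G ->
   forall H H' : {set 'I_n * 'I_n}, nc_bond G H -> nc_bond G H' ->
     is_glb (nc_bond G) H H' (H :&: H') /\ is_glb (is_bond G) H H' (H :&: H')).
Proof.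
move=> gG.
have part2 : crossing_closed G -> forall H H' : {set 'I_n * 'I_n}, nc_bond G H -> nc_bond G H' ->
     is_glb (nc_bond G) H H' (H :&: H') /\ is_glb (is_bond G) H H' (H :&: H').
  move=> cc H H' nH nH'; split; split.
  - exact: nc_inter.
  - exact: subsetIl.
  - exact: subsetIr.
  - by move=> K _ h1 h2; rewrite subsetI h1 h2.
  - apply: bond_inter; [exact: (andP nH).1 | exact: (andP nH').1].
  - exact: subsetIl.
  - exact: subsetIr.
  - by move=> K _ h1 h2; rewrite subsetI h1 h2.
split => //; split; first exact: lattice_cc.
move=> cc H1 H2 n1 n2; split.
  by exists (H1 :&: H2); case: (part2 cc _ _ n1 n2).
pose Pk := fun K : {set 'I_n * 'I_n} => [&& nc_bond G K, H1 \subset K & H2 \subset K].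
exists (G :&: \bigcap_(K | Pk K) K); split.
- apply: (big_rec (fun X => nc_bond G (G :&: X))); first by rewrite setIT; exact: nc_top.
  move=> K X /and3P [nK _ _] hX; rewrite setICA; exact: nc_inter.
- rewrite subsetI; apply/andP; split.
    by case/andP: n1 => /andP [].
  by apply/bigcapsP => K /and3P [].
- rewrite subsetI; apply/andP; split.
    by case/andP: n2 => /andP [].
  by apply/bigcapsP => K /and3P [].
- move=> K nK h1 h2; apply: subset_trans (subsetIr _ _) _.
  apply: bigcap_inf; by apply/and3P; split.
Qed.
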